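(* For every positive integer $n$, let $\mathrm{PF}_n(321)$ denote the set of parking functions $p=(p_1,\dots,p_n)$ of length $n$ that avoid $321$ as a word, i.e. for which there are no indices $i_1<i_2<i_3$ with $p_{i_1}>p_{i_2}>p_{i_3}$. Let $w_{n,n+1}(321)$ denote the number of words $w_1w_2\cdots w_n$ with all $w_i\in[n+1]$ for which there are no indices $i_1<i_2<i_3$ with $w_{i_1}>w_{i_2}>w_{i_3}$. Then \[|\mathrm{PF}_n(321)| = \frac{1}{n+1}\, w_{n,n+1}(321).\]
   Context: $[n]=\{1,2,\dots,n\}$. A tuple $p=(p_1,\dots,p_n)\in[n]^n$ is a parking function of length $n$ if its weakly increasing rearrangement $(p'_1,\dots,p'_n)$ satisfies $p'_i\le i$ for all $i\in[n]$. *)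

(* Defs.v *)
From mathcomp Require Import all_boot.
Set Implicit Arguments. Unset Strict Implicit. Unset Printing Implicit Defensive.

(* A word of length n over the alphabet [m] = {1,...,m} is encoded as
   w : {ffun 'I_n -> 'I_m}, where the letter w i : 'I_m with value k
   stands for the letter k+1 (shift by one; order is preserved). *)

Definition avoids321 (n m : nat) (w : {ffun 'I_n -> 'I_m}) : bool :=
  [forall i1 : 'I_n, forall i2 : 'I_n, forall i3 : 'I_n,
     ~~ [&& i1 < i2, i2 < i3, w i2 < w i1 & w i3 < w i2]].

(* Parking function of length n (values in [n], encoded 0-based):
   the weakly increasing rearrangement p' satisfies p'_i <= i for all i in [n]. *)
Definition is_parking (n : nat) (p : {ffun 'I_n -> 'I_n}) : bool :=
  let s := sort leq [seq nat_of_ord (p i) | i <- enum 'I_n] in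
  [forall i : 'I_n, nth 0 s i <= i].

Definition PF321 (n : nat) : {set {ffun 'I_n -> 'I_n}} :=
  [set p | is_parking p && avoids321 p].

Definition w321 (n m : nat) : nat := #|[set w : {ffun 'I_n -> 'I_m} | avoids321 w]|.

(* Main.v *)
Require Import Defs.
From mathcomp Require Import all_boot.
From mathcomp Require Import zify.
From Stdlib Require Import FunctionalExtensionality.
Set Implicit Arguments. Unset Strict Implicit. Unset Printing Implicit Defensive.

Definition addf (f g : nat -> nat) : nat -> nat := fun r => f r + g r.
Definition Sh (f : nat -> nat) : nat -> nat := fun r => f r.+1.
Definition Ps (f : nat -> nat) : nat -> nat := fun r => \sum_(1 <= d < r.+1) f d.
Definition Dop (f : nat -> nat) : nat -> nat := addf (Sh f) (Ps f).

Fixpoint Top (m : nat) (f : nat -> nat) : nat -> nat :=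
  match m with
  | 0 => f
  | m'.+1 => fun r => Top m' (Sh f) r + iter m'.+1 Ps f r
  end.

Lemma Ps_add f g : Ps (addf f g) = addf (Ps f) (Ps g).
Proof. apply: functional_extensionality => r; rewrite /Ps /addf big_split //. Qed.

Lemma iterPs_add m f g : iter m Ps (addf f g) = addf (iter m Ps f) (iter m Ps g).
Proof. elim: m => [|m IH] //=; rewrite IH Ps_add //. Qed.

Lemma Top_add m f g : Top m (addf f g) = addf (Top m f) (Top m g).
Proof.
elim: m f g => [|m IH] f g //=.
apply: functional_extensionality => r.
have -> : Sh (addf f g) = addf (Sh f) (Sh g) by [].
have := congr1 (fun F => F r) (iterPs_add m.+1 f g).
rewrite IH /addf /=; lia.
Qed.

Lemma Dop_add f g : Dop (addf f g) = addf (Dop f) (Dop g).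
Proof.
apply: functional_extensionality => r.
rewrite /Dop Ps_add /addf /Sh; lia.
Qed.

Lemma Top1 f : Top 1 f = Dop f.
Proof. by []. Qed.

Lemma Sh_Ps f : Sh (Ps f) = Dop f.
Proof.
apply: functional_extensionality => r.
rewrite /Sh /Dop /Ps /addf big_nat_recr //= addnC //.
Qed.

Lemma Top_key m f : addf (Top m.+2 f) (Top m (Dop f)) = Top m.+1 (Dop f).
Proof.
rewrite {2}/Dop Top_add.
apply: functional_extensionality => r.
rewrite /addf /=.
rewrite Sh_Ps -iterSr.
have -> : iter m.+1 Ps f = Ps (iter m Ps f) by []. lia.
Qed.

Lemma addf_inj f g h : addf f h = addf g h -> f = g.
Proof.
move=> E; apply: functional_extensionality => r.
have := congr1 (fun F => F r) E; rewrite /addf; lia.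
Qed.

Lemma TopD m f : Top m (Dop f) = Dop (Top m f).
Proof.
suff: (forall f, Top m (Dop f) = Dop (Top m f)) /\ (forall f, Top m.+1 (Dop f) = Dop (Top m.+1 f)) by case=> ->.
clear f; elim: m => [|m [IH1 IH2]]; first by split.
split=> // g.
apply: (@addf_inj _ _ (Dop (Top m (Dop g)))).
rewrite -Dop_add Top_key -IH1 -IH2.
exact: Top_key.
Qed.

Lemma Tcomm a b f : Top a (Top b f) = Top b (Top a f).
Proof.
suff: (forall f, Top a (Top b f) = Top b (Top a f)) /\ (forall f, Top a.+1 (Top b f) = Top b (Top a.+1 f)) by case=> ->.
elim: a => [|a [IH1 IH2]]; first by split=> // g; rewrite Top1 TopD.
split=> // g.
apply: (@addf_inj _ _ (Top a (Dop (Top b g)))).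
rewrite Top_key -TopD IH2 IH1 -Top_add Top_key //.
Qed.

Fixpoint allw (K N : nat) : seq (seq nat) :=
  if N is N'.+1 then [seq x :: w | x <- iota 0 K, w <- allw K N'] else [:: [::]].

Lemma mem_allw K N v : (v \in allw K N) = (size v == N) && all (fun x => x < K) v.
Proof.
elim: N v => [|N IH] v.
  by case: v => [|x v]; rewrite inE.
case: v => [|x v] /=.
  by apply/allpairsP => -[[y w]] /= [] _ _.
rewrite eqSS; apply/allpairsP/idP => [[[y w]] /= [] Hy Hw [-> ->]|].
    by move: Hw Hy; rewrite IH mem_iota /= => /andP[-> ->] ->.
  case/andP=> Hs /andP[Hx Ha]; exists (x, v) => /=; split=> //.
    by rewrite mem_iota.
  by rewrite IH Hs.
Qed.

Lemma uniq_allw K N : uniq (allw K N).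
Proof.
elim: N => [|N IH] //=.
apply: allpairs_uniq => //; first exact: iota_uniq.
by move=> [x1 w1] [x2 w2] _ _ /= [-> ->].
Qed.

Lemma sum_allw_cons K N (F : seq nat -> nat) :
  \sum_(v <- allw K N.+1) F v = \sum_(x <- iota 0 K) \sum_(w <- allw K N) F (x :: w).
Proof. by rewrite /= big_allpairs_dep. Qed.

Lemma perm_allw_rcons K N :
  perm_eq (allw K N.+1) [seq rcons w x | w <- allw K N, x <- iota 0 K].
Proof.
apply: uniq_perm; first exact: uniq_allw.
  apply: allpairs_uniq; [exact: uniq_allw|exact: iota_uniq|].
  by move=> [x1 w1] [x2 w2] _ _ /= /rcons_inj [-> ->].
move=> v; rewrite mem_allw; apply/idP/allpairsP.
  case/lastP: v => [|v x] //; rewrite size_rcons all_rcons eqSS => /andP[Hs /andP[Hx Ha]].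
  by exists (v, x) => /=; rewrite mem_allw Hs Ha mem_iota.
move=> [[w x]] /= [Hw Hx ->]; move: Hw Hx; rewrite mem_allw mem_iota size_rcons all_rcons eqSS.
by case/andP=> -> ->; rewrite /= => ->.
Qed.

Lemma sum_allw_rcons K N (F : seq nat -> nat) :
  \sum_(v <- allw K N.+1) F v = \sum_(w <- allw K N) \sum_(x <- iota 0 K) F (rcons w x).
Proof. by rewrite (perm_big _ (perm_allw_rcons K N)) big_allpairs_dep. Qed.

Definition has321 (s : seq nat) : bool :=
  has (fun a => has (fun b => has (fun c =>
     [&& b < a, c < b & subseq [:: a; b; c] s]) s) s) s.
Definition avoid (s : seq nat) : bool := ~~ has321 s.

Lemma has321P s :
  reflect (exists a b c, [/\ b < a, c < b & subseq [:: a; b; c] s]) (has321 s).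
Proof.
apply: (iffP idP).
  case/hasP=> a _ /hasP[b _ /hasP[c _ /and3P[H1 H2 H3]]].
  by exists a, b, c.
case=> a [b [c [H1 H2 H3]]].
have Hm := mem_subseq H3.
apply/hasP; exists a; first by apply: Hm; rewrite inE eqxx.
apply/hasP; exists b; first by apply: Hm; rewrite !inE eqxx orbT.
apply/hasP; exists c; first by apply: Hm; rewrite !inE eqxx !orbT.
by rewrite H1 H2 H3.
Qed.

Lemma avoid_subseq s t : subseq s t -> avoid t -> avoid s.
Proof.
move=> Hst; apply: contra => /has321P [a [b [c [H1 H2 H3]]]].
apply/has321P; exists a, b, c; split=> //; exact: subseq_trans H3 Hst.
Qed.

Lemma avoidP s : reflect (forall a b c, b < a -> c < b -> ~~ subseq [:: a; b; c] s) (avoid s).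
Proof.
apply: (iffP idP).
  move=> Ha a b c H1 H2; apply/negP => H3; move/negP: Ha; apply; apply/has321P.
  by exists a, b, c.
move=> H; apply/negP => /has321P [a [b [c [H1 H2 H3]]]].
by move/negP: (H a b c H1 H2).
Qed.

Fixpoint wis (s : seq nat) : nat :=
  if s is y :: v then (if sorted leq (y :: v) then (size v).+1 else wis v) else 0.

Lemma wis_sorted s : sorted leq s -> wis s = size s.
Proof. by case: s => [|y v] //= ->. Qed.

Lemma wis_rcons v k : all (fun x => x <= k) v -> wis (rcons v k) = (wis v).+1.
Proof.
elim: v => [|y v IH] //= /andP[Hy Ha].
rewrite rcons_path size_rcons IH //.
case: (path leq y v) => //=.
have: all (fun x => x <= k) (y :: v) by rewrite /= Hy.
by move=> H; rewrite (allP H _ (mem_last y v)).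
Qed.

Lemma sorted_last x t : sorted leq (x :: t) -> all (fun y => y <= last x t) (x :: t).
Proof.
elim: t x => [|y t IH] x /=; first by rewrite leqnn.
case/andP=> Hxy Hp; have := IH y Hp; rewrite /= => /andP[H1 H2].
by rewrite H1 H2 (leq_trans Hxy H1).
Qed.

Lemma not_sorted_inv s : ~~ sorted leq s -> exists b c, c < b /\ subseq [:: b; c] s.
Proof.
elim: s => [|x t IH] //=; case: t IH => [|y t] IH //=.
case: (leqP x y) => Hxy /=.
  move=> Hp; have [b [c [H1 H2]]] := IH Hp.
  by exists b, c; split=> //; apply: subseq_trans H2 (subseq_cons _ _).
move=> _; exists x, y; split=> //=; rewrite !eqxx /=.
by rewrite sub0seq.
Qed.

Lemma sorted_noinv s b c : sorted leq s -> subseq [:: b; c] s -> b <= c.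
Proof.
move=> Hs Hsub; have := subseq_sorted leq_trans Hsub Hs; by rewrite /= andbT.
Qed.

Definition Ins k u m (v : seq nat) := (filter (fun x => x < k) v == u) && (count_mem k v == m).

Definition E k u m (f : nat -> nat) :=
  \sum_(v <- allw k.+1 (size u + m) | Ins k u m v && (last k.+1 v != k)) f (wis v).

Lemma sum_pick (r : seq nat) a (G : nat -> nat) :
  uniq r -> a \in r -> \sum_(x <- r) (if x == a then G x else 0) = G a.
Proof.
move=> Hu Ha; rewrite (bigD1_seq a) //= eqxx big1 ?addn0 // => x /negbTE -> //.
Qed.

Lemma sum_pick_s (r : seq (seq nat)) a (G : seq nat -> nat) :
  uniq r -> a \in r -> \sum_(x <- r) (if x == a then G x else 0) = G a.
Proof.
move=> Hu Ha; rewrite (bigD1_seq a) //= eqxx big1 ?addn0 // => x /negbTE -> //.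
Qed.

Lemma allw_lt K N v : v \in allw K N -> all (fun x => x < K) v.
Proof. by rewrite mem_allw => /andP[]. Qed.

Lemma all_lt_le k v : all (fun x => x < k.+1) v -> all (fun x => x <= k) v.
Proof. by []. Qed.

Lemma Ins0 k u w : all (fun x => x < k.+1) w -> all (fun x => x < k) u ->
  Ins k u 0 w = (w == u).
Proof.
move=> Hw Hu; rewrite /Ins; apply/idP/eqP.
  case/andP=> /eqP <- /eqP H0; apply/esym/all_filterP/allP => x Hx.
  have := allP Hw x Hx; rewrite ltnS leq_eqVlt => /orP[/eqP Exk|//].
  by move: H0; rewrite -Exk; move/count_memPn; rewrite Hx.
move=> ->; rewrite (all_filterP Hu) eqxx /=; apply/eqP/count_memPn/negP => Hk.
by have := allP Hu k Hk; rewrite ltnn.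
Qed.

Lemma last_ne (w : seq nat) a b : w != [::] -> last a w = last b w.
Proof. by case: w. Qed.

Lemma Ins_ne k u m w : Ins k u m.+1 w -> w != [::].
Proof. by case: w => // /andP[_ /eqP]. Qed.

Lemma Ins_rcons_k k u m w : Ins k u m.+1 (rcons w k) = Ins k u m w.
Proof.
rewrite /Ins filter_rcons ltnn -cats1 count_cat /= eqxx addn1 eqSS //.
Qed.

Lemma split_last k u m f :
  \sum_(v <- allw k.+1 (size u + m.+1) | Ins k u m.+1 v) f (wis v) =
  \sum_(w <- allw k.+1 (size u + m) | Ins k u m w) f (wis w).+1 + E k u m.+1 f.
Proof.
rewrite /E (bigID (fun v => last k.+1 v == k)) /=; congr (_ + _).
rewrite addnS big_mkcond sum_allw_rcons [RHS]big_mkcond.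
apply: eq_big_seq => w Hw.
rewrite (eq_bigr (fun x => if x == k then (if Ins k u m.+1 (rcons w x) then f (wis (rcons w x)) else 0) else 0)); last first.
  by move=> x _; rewrite last_rcons; case: eqP => _; rewrite ?andbT ?andbF.
rewrite sum_pick ?iota_uniq ?mem_iota //= Ins_rcons_k.
by rewrite wis_rcons //; apply: allw_lt Hw.
Qed.

Lemma E_nil k m f : E k [::] m.+1 f = 0.
Proof.
rewrite /E big_mkcond big1_seq // => v /andP[_ Hv].
case HI: (Ins k [::] m.+1 v) => //=.
have Hne := Ins_ne HI.
move: HI => /andP[/eqP Hf _].
have Hall : all (fun x => x == k) v.
  apply/allP => x Hx; have := allP (allw_lt Hv) x Hx.
  rewrite ltnS leq_eqVlt => /orP[//|Hlt].
  have : x \in filter (fun x => x < k) v by rewrite mem_filter Hlt Hx.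
  by rewrite Hf.
case: v Hv Hne Hall {Hf} => [|y v] // _ _ Hall.
by rewrite /= (eqP (allP Hall _ (mem_last y v))) eqxx.
Qed.

Lemma wis_cons_nonsorted y w : ~~ sorted leq (y :: w) -> wis (y :: w) = wis w.
Proof. by move=> /= /negbTE ->. Qed.

Lemma E_cons k x s m f : x < k -> sorted leq (x :: s) -> all (fun y => y < k) s ->
  E k (x :: s) m.+1 f = E k s m.+1 f + (if m is 0 then f (size s).+1 else E k (x :: s) m f).
Proof.
move=> Hxk Hsort Hs.
have Hxk' : (x == k) = false by apply/negbTE; rewrite neq_ltn Hxk.
have Hxs : all (fun y => y < k) (x :: s) by rewrite /= Hxk Hs.
rewrite {1}/E.
have -> : size (x :: s) + m.+1 = (size s + m.+1).+1 by rewrite /= addSn.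
rewrite big_mkcond sum_allw_cons.
set RHS2 := (if m is 0 then _ else _).
rewrite (eq_big_seq (fun y => (if y == x then E k s m.+1 f else 0) + (if y == k then RHS2 else 0))).
  rewrite big_split !sum_pick //; try exact: iota_uniq; rewrite mem_iota; lia.
move=> y Hy.
case: (eqVneq y x) => [->|Hyx].
  rewrite Hxk' addn0 /E [RHS]big_mkcond; apply: eq_big_seq => w Hw.
  have -> : Ins k (x :: s) m.+1 (x :: w) = Ins k s m.+1 w.
    by rewrite /Ins /= Hxk eqseq_cons eqxx /= Hxk' add0n.
  case HI: (Ins k s m.+1 w) => //=.
  rewrite (last_ne x k.+1 (Ins_ne HI)).
  case: eqP => //= Hl.
  suff -> : path leq x w = false by []. apply/negP => Hsw.
  have Hkw : k \in w.
    by move: HI => /andP[_ /eqP Hc]; rewrite -has_pred1 has_count Hc.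
  have := allP (sorted_last Hsw) k; rewrite inE Hkw orbT => /(_ isT) Hk1.
  have Hlast : last x w < k.+1.
    have := mem_last x w; rewrite inE => /orP[/eqP ->|Hm]; first by rewrite ltnS ltnW.
    exact: allP (allw_lt Hw) _ Hm.
  apply: Hl; rewrite (last_ne k.+1 x (Ins_ne HI)); apply/eqP; rewrite eqn_leq Hk1 andbT.
  by rewrite -ltnS.
case: (eqVneq y k) => [->|Hyk].
  rewrite add0n.
  have Hins : forall w, Ins k (x :: s) m.+1 (k :: w) = Ins k (x :: s) m w.
    by move=> w; rewrite /Ins /= ltnn eqxx add1n eqSS.
  have Hwis : forall w, Ins k (x :: s) m w -> wis (k :: w) = wis w.
    move=> w /andP[/eqP Hf _]; apply: wis_cons_nonsorted; apply/negP => Hsw.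
    have Hxw : x \in w.
      have : x \in filter (fun x => x < k) w by rewrite Hf inE eqxx.
      by rewrite mem_filter => /andP[].
    have := order_path_min leq_trans Hsw => /allP /(_ x Hxw).
    by rewrite leqNgt Hxk.
  rewrite /RHS2; clear RHS2; case: m Hins Hwis => [|m] Hins Hwis.
    rewrite (eq_big_seq (fun w => if w == x :: s then f (size s).+1 else 0)).
      rewrite sum_pick_s ?uniq_allw // mem_allw /= addn1 eqxx /=.
      by rewrite ltnS (ltnW Hxk) /=; apply/allP => z Hz; rewrite ltnS; apply: ltnW; exact: (allP Hs z Hz).
    move=> w Hw; rewrite Hins Ins0 //; last exact: allw_lt Hw.
    case: eqP => // ->.
    have HI0 : Ins k (x :: s) 0 (x :: s).
      by rewrite /Ins (all_filterP Hxs) eqxx; apply/eqP/count_memPn/negP => /(allP Hxs); rewrite ltnn.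
    rewrite Hwis // wis_sorted //.
    have Hm := mem_last x s.
    have -> : last k.+1 (k :: x :: s) != k by rewrite /= neq_ltn (allP Hxs _ Hm).
    by [].
  rewrite /E.
  have -> : size (x :: s) + m.+1 = size s + m.+2 by rewrite /= addSnnS.
  rewrite [RHS]big_mkcond; apply: eq_big_seq => w Hw.
  rewrite Hins; case HI: (Ins k (x :: s) m.+1 w) => //=.
  have := Hwis w HI; rewrite /= => ->; rewrite (last_ne k k.+1 (Ins_ne HI)) //.
rewrite big1_seq // => w _.
case HI: (Ins k (x :: s) m.+1 (y :: w)) => //.
move: HI => /andP[/eqP Hf _]; move: Hf => /=.
case: ltnP => Hyk2.
  by case=> Eyx; move: Hyx; rewrite Eyx eqxx.
by move: Hy Hyk; rewrite mem_iota; lia.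
Qed.

Lemma iterPs_S m f r : iter m.+1 Ps f r.+1 = iter m.+1 Ps f r + iter m Ps f r.+1.
Proof. by rewrite /= /Ps big_nat_recr. Qed.

Lemma E_formula k s m f : sorted leq s -> all (fun y => y < k) s ->
  E k s m.+1 f = iter m.+1 Ps f (size s).
Proof.
elim: s m => [|x s IH] m Hsort Hall.
  by rewrite E_nil /= /Ps big_geq.
move: (Hall) => /= /andP[Hxk Hs].
have Hs' : sorted leq s by move: Hsort => /= /path_sorted.
elim: m => [|m IHm].
  by rewrite E_cons // IH //; exact: (esym (iterPs_S 0 f (size s))).
rewrite E_cons // IH // IHm.
exact: (esym (iterPs_S m.+1 f (size s))).
Qed.

Lemma LS k u m f : sorted leq u -> all (fun y => y < k) u ->
  \sum_(v <- allw k.+1 (size u + m) | Ins k u m v) f (wis v) = Top m f (size u).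
Proof.
move=> Hsort Hall.
elim: m f => [|m IH] f.
  rewrite addn0 big_mkcond.
  rewrite (eq_big_seq (fun v => if v == u then f (size u) else 0)).
    rewrite sum_pick_s ?uniq_allw // mem_allw eqxx /=.
    by apply/allP => z Hz; rewrite ltnS ltnW // (allP Hall z Hz).
  move=> v Hv; rewrite Ins0 //; last exact: allw_lt Hv.
  by case: eqP => // ->; rewrite wis_sorted.
rewrite split_last E_formula //.
have := IH (Sh f); rewrite /Sh => ->.
by [].
Qed.

Lemma Ins_sorted_avoid k u m v : sorted leq u -> all (fun x => x < k.+1) v ->
  Ins k u m v -> avoid v.
Proof.
move=> Hsort Hv /andP[/eqP Hf _].
apply/avoidP => a b c Hab Hbc; apply/negP => Hsub.
have Hsub2 : subseq [:: b; c] v := cons_subseq Hsub.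
have Ha : a < k.+1 by apply: (allP Hv); apply: (mem_subseq Hsub); rewrite inE eqxx.
have : subseq [:: b; c] (filter (fun x => x < k) v).
  rewrite subseq_filter Hsub2 /= andbT; apply/andP; split; lia.
by rewrite Hf => /(sorted_noinv Hsort); rewrite leqNgt Hbc.
Qed.

Lemma avoid_cons_ins k x u0 w : x < k -> avoid (x :: u0) ->
  filter (fun y => y < k) w = u0 -> avoid (x :: w) = avoid w.
Proof.
move=> Hxk Hav Hf; apply/idP/idP; first exact: avoid_subseq (subseq_cons _ _).
move=> Hw; apply/avoidP => a b c Hab Hbc; apply/negP => Hsub.
move: Hsub => /=; case: eqP => [Eax|_] Hsub.
  have : subseq [:: b; c] (filter (fun y => y < k) w).
    rewrite subseq_filter Hsub /= andbT; apply/andP; split; lia.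
  rewrite Hf => Hs2.
  move/avoidP: Hav => /(_ a b c Hab Hbc) /negP; apply.
  by rewrite /= Eax eqxx.
by move/avoidP: Hw => /(_ a b c Hab Hbc) /negP; apply.
Qed.

Lemma L k u m f : avoid u -> all (fun y => y < k) u ->
  \sum_(v <- allw k.+1 (size u + m) | Ins k u m v && avoid v) f (wis v) = Top m f (wis u).
Proof.
elim: u => [|x u0 IH] Hav Hall.
  rewrite -(LS m f (isT : sorted leq [::]) Hall) /= big_mkcond [RHS]big_mkcond; apply: eq_big_seq => v Hv.
  case HI: (Ins k [::] m v) => //=.
  by rewrite (Ins_sorted_avoid (isT : sorted leq [::]) (allw_lt Hv) HI).
case Hs: (sorted leq (x :: u0)).
  rewrite wis_sorted // -(LS m f Hs Hall) big_mkcond [RHS]big_mkcond; apply: eq_big_seq => v Hv.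
  case HI: (Ins k (x :: u0) m v) => //=.
  by rewrite (Ins_sorted_avoid Hs (allw_lt Hv) HI).
have /andP[Hxk Hall0] : (x < k) && all (fun y => y < k) u0 := Hall.
have Hav0 : avoid u0 by apply: avoid_subseq Hav; apply: subseq_cons.
rewrite wis_cons_nonsorted ?Hs // -IH //.
have -> : size (x :: u0) + m = (size u0 + m).+1 by rewrite /= addSn.
rewrite big_mkcond sum_allw_cons.
rewrite (eq_big_seq (fun y => if y == x then
   \sum_(w <- allw k.+1 (size u0 + m) | Ins k u0 m w && avoid w) f (wis w) else 0)).
  by rewrite sum_pick ?iota_uniq // mem_iota; lia.
move=> y Hy.
case: (eqVneq y x) => [->|Hyx].
  rewrite [RHS]big_mkcond; apply: eq_big_seq => w Hw.
  have -> : Ins k (x :: u0) m (x :: w) = Ins k u0 m w.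
    have Hxk' : (x == k) = false by apply/negbTE; rewrite neq_ltn Hxk.
    by rewrite /Ins /= Hxk eqseq_cons eqxx /= Hxk' add0n.
  case HI: (Ins k u0 m w) => //.
  move: (HI) => /andP[/eqP Hf _].
  rewrite (avoid_cons_ins Hxk Hav Hf).
  case: (avoid w); last by [].
  rewrite wis_cons_nonsorted //; apply/negP => Hsw.
  have := sorted_filter leq_trans (fun y => y < k) Hsw.
  by rewrite /= Hxk Hf Hs.
rewrite big1_seq // => w _.
case HI: (Ins k (x :: u0) m (y :: w)) => //=.
move: HI => /andP[/eqP Hf _].
case: (ltnP y k) => Hyk.
  by move: Hf; rewrite /= Hyk => -[Eyx]; move: Hyx; rewrite Eyx eqxx.
have Eyk : y = k by move: Hy; rewrite mem_iota; lia.
subst y.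
move: Hf; rewrite /= ltnn => Hf.
have [b [c [Hcb Hsub]]] : exists b c, c < b /\ subseq [:: b; c] (x :: u0).
  by apply: not_sorted_inv; rewrite Hs.
have Hb : b < k.
  have := mem_subseq Hsub; move/(_ b); rewrite inE eqxx => /(_ isT) Hb.
  exact: (allP Hall).
have Hsw : subseq [:: b; c] w.
  by apply: subseq_trans Hsub _; rewrite -Hf; apply: filter_subseq.
suff -> : avoid (k :: w) = false by [].
apply/negbTE/negP => /avoidP /(_ k b c Hb Hcb) /negP; apply.
by rewrite /= eqxx.
Qed.

Definition Phi (nu : seq nat) : nat -> nat := foldr (fun m g => Top m g) (fun _ => 1) nu.
Definition tc k L (w : seq nat) := [seq count_mem (k + i) w | i <- iota 0 L].

Lemma tc_cons k L w : tc k L.+1 w = count_mem k w :: tc k.+1 L w.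
Proof.
rewrite /tc /= addn0; congr cons.
rewrite (iotaDl 1 0) -map_comp; apply: eq_map => i /=.
by rewrite add1n addnS addSn.
Qed.

Lemma group_by (L1 L2 : seq (seq nat)) (g : seq nat -> seq nat) (P : pred (seq nat))
  (F : seq nat -> nat) : uniq L2 -> (forall w, w \in L1 -> P w -> g w \in L2) ->
  \sum_(w <- L1 | P w) F w = \sum_(y <- L2) \sum_(w <- L1 | P w && (g w == y)) F w.
Proof.
move=> HU Hg.
rewrite [RHS](eq_bigr (fun y => \sum_(w <- L1) (if P w && (g w == y) then F w else 0)));
  last by move=> y _; rewrite big_mkcond.
rewrite [RHS]exchange_big /= big_mkcond; apply: eq_big_seq => w Hw.
case HP: (P w) => /=; last by rewrite big1.
rewrite (eq_bigr (fun y => if y == g w then F w else 0)); last by move=> y _; rewrite eq_sym.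
by rewrite sum_pick_s //; apply: Hg.
Qed.

Lemma count_ltS k w : count (fun y => y < k.+1) w = count (fun y => y < k) w + count_mem k w.
Proof.
elim: w => //= y w ->.
case: (ltngtP y k) => H.
- rewrite /=; lia.
- have -> : y < k.+1 = false by apply/negbTE; rewrite -leqNgt.
  rewrite /=; lia.
- rewrite H ltnSn /=; lia.
Qed.

Lemma filter_ltS k w :
  filter (fun y => y < k) (filter (fun y => y < k.+1) w) = filter (fun y => y < k) w.
Proof.
rewrite -filter_predI; apply: eq_filter => y /=.
by case: (ltnP y k) => H //=; rewrite ltnS ltnW.
Qed.

Lemma count_k_ltS k w : count_mem k (filter (fun y => y < k.+1) w) = count_mem k w.
Proof.
rewrite count_filter; apply: eq_count => y /=.
by case: eqP => // ->; rewrite ltnSn.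
Qed.

Lemma Phi_count nu : forall k u, all (fun y => y < k) u -> avoid u ->
  \sum_(w <- allw (k + size nu) (size u + sumn nu) |
     [&& filter (fun y => y < k) w == u, tc k (size nu) w == nu & avoid w]) 1 = Phi nu (wis u).
Proof.
elim: nu => [|m nu IH] k u Hu Hav.
  rewrite /= !addn0 big_mkcond /=.
  rewrite (eq_big_seq (fun w => if w == u then 1 else 0)).
    by rewrite sum_pick_s ?uniq_allw // mem_allw eqxx.
  move=> w Hw; rewrite (all_filterP (allw_lt Hw)).
  by case: eqP => // ->; rewrite Hav.
have -> : k + size (m :: nu) = k.+1 + size nu by rewrite /= addnS addSn.
have -> : size u + sumn (m :: nu) = (size u + m) + sumn nu by rewrite /= addnA.
rewrite (@group_by _ (allw k.+1 (size u + m)) (filter (fun y => y < k.+1)) _ _ (uniq_allw k.+1 (size u + m))); last first.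
  move=> w Hw /and3P[/eqP Hf Htc _].
  move: Htc; rewrite tc_cons eqseq_cons => /andP[/eqP Hc _].
  rewrite mem_allw filter_all andbT size_filter count_ltS -size_filter Hf Hc //.
rewrite /= -(L m (Phi nu) Hav Hu) [RHS]big_mkcond; apply: eq_big_seq => u' Hu'.
have Hu'lt := allw_lt Hu'.
have Hsz : size u' = size u + m by move: Hu'; rewrite mem_allw => /andP[/eqP].
case HI: (Ins k u m u' && avoid u').
  move: HI => /andP[HI Hav'].
  rewrite -(IH k.+1 u' Hu'lt Hav') Hsz; apply: eq_bigl => w.
  case: (eqVneq (filter (fun y => y < k.+1) w) u') => [Ef|_]; last by rewrite !andbF.
  rewrite tc_cons eqseq_cons -filter_ltS -(count_k_ltS k w) Ef.
  move: HI => /andP[/eqP -> /eqP ->]; rewrite !eqxx /=.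
  by case: (tc k.+1 (size nu) w == nu); case: (avoid w).
rewrite big1 // => w /andP[/and3P[/eqP Hf Htc Hw] /eqP Ef].
move: HI; rewrite -Ef.
move: Htc; rewrite tc_cons eqseq_cons => /andP[/eqP Hc _].
rewrite /Ins filter_ltS count_k_ltS Hf Hc !eqxx /=.
by rewrite (avoid_subseq (filter_subseq _ _) Hw).
Qed.

Lemma Phi_rcons s x : Phi (rcons s x) = Phi (x :: s).
Proof.
elim: s => [|y s IH] //=; rewrite IH /= Tcomm //.
Qed.

Lemma Phi_catC s t : Phi (s ++ t) = Phi (t ++ s).
Proof.
elim: s t => [|x s IH] t; first by rewrite cats0.
by rewrite cat_cons -Phi_rcons rcons_cat IH cat_rcons.
Qed.

Lemma Phi_rot j s : Phi (rot j s) = Phi s.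
Proof. by rewrite /rot Phi_catC cat_take_drop. Qed.

Lemma sumn_tc K v : all (fun x => x < K) v -> sumn (tc 0 K v) = size v.
Proof.
move=> Hv; rewrite /tc sumnE big_map.
rewrite (eq_bigr (fun i => \sum_(y <- v) (if y == i then 1 else 0))); last first.
  by move=> i _; rewrite add0n -sum1_count big_mkcond.
rewrite exchange_big /= -sum1_size big_mkcond /=; apply: eq_big_seq => y Hy.
rewrite (eq_bigr (fun i => if i == y then 1 else 0)); last by move=> i _; rewrite eq_sym.
by rewrite sum_pick ?iota_uniq // mem_iota /= (allP Hv y Hy).
Qed.

Lemma filter_lt0 (w : seq nat) : filter (fun y => y < 0) w = [::].
Proof. by elim: w. Qed.

Lemma content_decomp K N (Qc : seq nat -> bool) :
  \sum_(v <- allw K N | Qc (tc 0 K v) && avoid v) 1 =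
  \sum_(mu <- allw N.+1 K | (sumn mu == N) && Qc mu) Phi mu 0.
Proof.
rewrite (@group_by _ (allw N.+1 K) (tc 0 K) _ _ (uniq_allw N.+1 K)); last first.
  move=> v Hv _; rewrite mem_allw /tc size_map size_iota eqxx /=.
  apply/allP => c /mapP [i _ ->]; rewrite ltnS.
  by move: Hv; rewrite mem_allw => /andP[/eqP <- _]; apply: count_size.
rewrite [RHS]big_mkcond; apply: eq_big_seq => mu Hmu.
have Hsz : size mu = K by move: Hmu; rewrite mem_allw => /andP[/eqP].
case HQ: ((sumn mu == N) && Qc mu).
  move: HQ => /andP[/eqP HN HQ].
  have := @Phi_count mu 0 [::] isT isT; rewrite /= !add0n Hsz HN => <-.
  apply: eq_bigl => w; rewrite filter_lt0 eqxx /=.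
  by case: eqP => [->|_]; rewrite ?HQ ?andbF ?andbT.
rewrite big1_seq // => v /andP[/andP[/andP[HQv Hav] /eqP Ht] Hv].
move: HQ; rewrite -Ht HQv andbT sumn_tc; last exact: allw_lt Hv.
by move: Hv; rewrite mem_allw => /andP[->].
Qed.

Definition PFc (mu : seq nat) : bool :=
  all (fun i => i.+1 <= sumn (take i.+1 mu)) (iota 0 (size mu).-1).

Lemma sum_take_rot (mu : seq nat) j t : j <= size mu -> t <= size mu ->
  sumn (take t (rot j mu)) + sumn (take j mu) =
  (if t <= size mu - j then sumn (take (j + t) mu)
   else sumn mu + sumn (take (t - (size mu - j)) mu)).
Proof.
move=> Hj Ht; rewrite /rot take_cat size_drop.
case: ltnP => H1.
  have -> : t <= size mu - j by lia.
  by rewrite takeD sumn_cat addnC.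
have Hs : sumn mu = sumn (take j mu) + sumn (drop j mu) by rewrite -sumn_cat cat_take_drop.
case: leqP => H2.
  have Et : t = size mu - j by lia.
  rewrite Et subnn take0 cats0.
  have -> : j + (size mu - j) = size mu by lia.
  rewrite take_size; lia.
rewrite take_takel; last by lia.
rewrite sumn_cat; lia.
Qed.

Definition sgm (mu : seq nat) i := sumn (take i mu).

Definition Good (mu : seq nat) j :=
  (forall q, q < j -> sgm mu j + q < sgm mu q + j) /\
  (forall p, j < p -> p < size mu -> sgm mu j + p <= sgm mu p + j).

Lemma PFc_rot mu n j : size mu = n.+1 -> sumn mu = n -> j < n.+1 ->
  PFc (rot j mu) <-> Good mu j.
Proof.
move=> Hsz Hsum Hj.
have Hj' : j <= size mu by rewrite Hsz ltnW.
have Hsig0 : sgm mu 0 = 0 by rewrite /sgm take0.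
have HsigL : sgm mu (size mu) = n by rewrite /sgm take_size.
rewrite /PFc size_rot Hsz /=; split.
  move/allP => H; split.
    move=> q Hq.
    set t := q + (size mu - j).
    have Ht1 : 0 < t by rewrite /t; lia.
    have Ht2 : t <= n by rewrite /t; lia.
    have := H t.-1; rewrite mem_iota (prednK Ht1) => /(_ ltac:(lia)) Hpf.
    have := @sum_take_rot mu j t Hj' ltac:(lia).
    case: (leqP t (size mu - j)) => Hc.
      have Eq : q = 0 by rewrite /t in Hc; lia.
      have E : j + t = size mu by rewrite /t; lia.
      rewrite E take_size => Heq.
      rewrite Eq Hsig0 /sgm; lia.
    have E : t - (size mu - j) = q by rewrite /t; lia.
    rewrite E => Heq; rewrite /sgm; lia.
  move=> p Hjp Hp.
  set t := p - j.
  have Ht1 : 0 < t by rewrite /t; lia.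
  have Ht2 : t <= n by rewrite /t; lia.
  have := H t.-1; rewrite mem_iota (prednK Ht1) => /(_ ltac:(lia)) Hpf.
  have := @sum_take_rot mu j t Hj' ltac:(lia).
  have -> : t <= size mu - j by rewrite /t; lia.
  have -> : j + t = p by rewrite /t; lia.
  move=> Heq; rewrite /sgm; lia.
case=> G1 G2; apply/allP => i; rewrite mem_iota => /andP[_ Hi].
have := @sum_take_rot mu j i.+1 Hj' ltac:(lia).
case: (leqP i.+1 (size mu - j)) => Hc.
  case: (ltnP (j + i.+1) (size mu)) => Hp.
    have := G2 (j + i.+1) ltac:(lia) Hp; rewrite /sgm => H1 Heq; lia.
  have E : j + i.+1 = size mu by lia.
  rewrite E take_size => Heq.
  have := G1 0 ltac:(lia); rewrite Hsig0 /sgm => H1; lia.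
have := G1 (i.+1 - (size mu - j)) ltac:(lia); rewrite /sgm => H1 Heq; lia.
Qed.

Lemma global_min (f : nat -> nat) L : 0 < L ->
  exists j, j < L /\ (forall i, i < L -> f j <= f i).
Proof.
elim: L => [|L IH] // _.
case: L IH => [|L] IH.
  by exists 0; split=> // i; rewrite ltnS leqn0 => /eqP ->.
have [j [Hj Hmin]] := IH isT.
case: (leqP (f j) (f L.+1)) => H.
  exists j; split; first by lia.
  move=> i; rewrite ltnS leq_eqVlt => /orP[/eqP ->|Hi] //; exact: Hmin.
exists L.+1; split=> // i; rewrite ltnS leq_eqVlt => /orP[/eqP ->|Hi] //.
have := Hmin i Hi; lia.
Qed.

Lemma first_min (f : nat -> nat) L : 0 < L ->
  exists j, [/\ j < L, (forall q, q < j -> f j < f q) & (forall p, p < L -> f j <= f p)].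
Proof.
move=> HL; have [j0 [Hj0 Hmin]] := global_min f HL.
have Hex : exists i, (i < L) && (f i == f j0) by exists j0; rewrite Hj0 eqxx.
case: (ex_minnP Hex) => j /andP[Hj /eqP Hfj] Hleast.
exists j; split=> //.
  move=> q Hq.
  have Hq' : q < L by lia.
  have := Hmin q Hq'; rewrite leq_eqVlt => /orP[/eqP E|]; last by rewrite Hfj.
  have := Hleast q; rewrite Hq' E eqxx /= => /(_ isT); lia.
by move=> p Hp; rewrite Hfj; apply: Hmin.
Qed.

Lemma cycle_lemma mu n : size mu = n.+1 -> sumn mu = n ->
  \sum_(j < n.+1) PFc (rot j mu) = 1.
Proof.
move=> Hsz Hsum.
have Hle : forall i, i <= size mu -> sgm mu i <= n.
  move=> i Hi; rewrite /sgm -Hsum -{2}(cat_take_drop i mu) sumn_cat; lia.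
have [j [Hj Hlt Hle2]] := first_min (fun i => sgm mu i + (n.+1 - i)) (ltn0Sn n).
have Gj : Good mu j.
  split.
    move=> q Hq; have := Hlt q Hq; lia.
  move=> p Hjp Hp; rewrite Hsz in Hp; have := Hle2 p Hp; lia.
have Huniq : forall i, i < n.+1 -> Good mu i -> i = j.
  move=> i Hi [Gi1 Gi2]; case: Gj => [Gj1 Gj2].
  case: (ltngtP i j) => // H.
    have := Gj1 i H; have := Gi2 j H ltac:(lia); lia.
  have := Gi1 j H; have := Gj2 i H ltac:(lia); lia.
rewrite (bigD1 (Ordinal Hj)) //=.
have -> : PFc (rot j mu) by apply/(PFc_rot Hsz Hsum Hj).
rewrite big1 // => i Hi.
case HP: (PFc (rot i mu)) => //.
have := Huniq i (ltn_ord i) (iffLR (PFc_rot Hsz Hsum (ltn_ord i)) HP).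
move=> E; move: Hi; rewrite -val_eqE /= E eqxx //.
Qed.

Lemma perm_map_rot K N j : perm_eq (map (rot j) (allw K N)) (allw K N).
Proof.
apply: uniq_perm.
- rewrite map_inj_uniq ?uniq_allw //; exact: rot_inj.
- exact: uniq_allw.
move=> v; apply/mapP/idP.
  case=> mu Hmu ->; move: Hmu; rewrite !mem_allw size_rot.
  by rewrite (eq_all_r (mem_rot j mu)).
move=> Hv; exists (rotr j v); last by rewrite rotrK.
by move: Hv; rewrite !mem_allw size_rotr (eq_all_r (mem_rotr j v)).
Qed.

Lemma pollak n :
  \sum_(mu <- allw n.+1 n.+1 | sumn mu == n) Phi mu 0 =
  n.+1 * \sum_(mu <- allw n.+1 n.+1 | (sumn mu == n) && PFc mu) Phi mu 0.
Proof.
set L := allw n.+1 n.+1.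
have -> : \sum_(mu <- L | sumn mu == n) Phi mu 0 =
    \sum_(mu <- L | sumn mu == n) \sum_(j < n.+1) PFc (rot j mu) * Phi mu 0.
  rewrite big_seq_cond [RHS]big_seq_cond; apply: eq_bigr => mu /andP[Hmu /eqP Hs].
  rewrite -big_distrl /= cycle_lemma ?mul1n //.
  by move: Hmu; rewrite mem_allw => /andP[/eqP].
rewrite exchange_big /=.
rewrite (eq_bigr (fun _ => \sum_(mu <- L | sumn mu == n) PFc mu * Phi mu 0)); last first.
  move=> j _.
  rewrite -[RHS](perm_big _ (perm_map_rot n.+1 n.+1 j)) big_map.
  apply: eq_big => mu; first by rewrite sumn_rot.
  by rewrite Phi_rot.
rewrite big_const_ord iter_addn_0 mulnC big_mkcondr /=; congr (_ * _).
by apply: eq_bigr => mu _; case: (PFc mu); rewrite ?mul1n ?mul0n.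
Qed.

Definition fw n K (w : {ffun 'I_n -> 'I_K}) : seq nat := [seq nat_of_ord (w i) | i <- enum 'I_n].

Lemma size_fw n K (w : {ffun 'I_n -> 'I_K}) : size (fw w) = n.
Proof. by rewrite size_map size_enum_ord. Qed.

Lemma nth_fw n K (w : {ffun 'I_n -> 'I_K}) (i : 'I_n) : nth 0 (fw w) i = w i.
Proof. by rewrite (nth_map i) ?size_enum_ord // nth_ord_enum. Qed.

Lemma fw_inj n K : injective (@fw n K).
Proof.
move=> w1 w2 E; apply/ffunP => i; apply: val_inj => /=.
by rewrite -!nth_fw E.
Qed.

Lemma perm_fw n k : perm_eq (map (@fw n k.+1) (enum {ffun 'I_n -> 'I_k.+1})) (allw k.+1 n).
Proof.
apply: uniq_perm.
- rewrite map_inj_uniq ?enum_uniq //; exact: fw_inj.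
- exact: uniq_allw.
move=> v; rewrite mem_allw; apply/mapP/idP.
  case=> w _ ->; rewrite size_fw eqxx /=.
  by apply/allP => x /mapP [i _ ->].
case/andP=> /eqP Hs Ha.
exists [ffun i : 'I_n => inord (nth 0 v i) : 'I_k.+1]; first by rewrite mem_enum.
apply: (@eq_from_nth _ 0); first by rewrite size_fw.
move=> i; rewrite Hs => Hi.
have := nth_fw [ffun i : 'I_n => inord (nth 0 v i) : 'I_k.+1] (Ordinal Hi).
rewrite /= => ->; rewrite ffunE /= inordK //.
by apply: (allP Ha); apply: mem_nth; rewrite Hs.
Qed.

Lemma card_bridge n k (Q : pred (seq nat)) :
  #|[set w : {ffun 'I_n -> 'I_k.+1} | Q (fw w)]| = \sum_(v <- allw k.+1 n | Q v) 1.
Proof.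
rewrite -sum1_card.
rewrite -(perm_big _ (perm_fw n k)) big_map.
rewrite big_enum_cond /=; apply: eq_bigl => w; by rewrite inE.
Qed.

Lemma subseq_consP (x : nat) t s :
  reflect (exists i, [/\ i < size s, nth 0 s i = x & subseq t (drop i.+1 s)])
          (subseq (x :: t) s).
Proof.
apply: (iffP idP).
  elim: s => [|y s IH] //=.
  case: eqP => [->|_] H.
    by exists 0; rewrite drop0.
  have [i [H1 H2 H3]] := IH H; by exists i.+1.
case=> i []; elim: s i => [|y s IH] i //= Hi.
case: i Hi => [|i] Hi /=.
  by move=> -> ; rewrite drop0 eqxx.
move=> Hn Hsub; case: eqP => _; last exact: IH Hn Hsub.
apply: subseq_trans Hsub _; exact: drop_subseq.
Qed.

Lemma subseq3P (s : seq nat) a b c :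
  reflect (exists i j k, [/\ i < j, j < k, k < size s &
             [/\ nth 0 s i = a, nth 0 s j = b & nth 0 s k = c]])
          (subseq [:: a; b; c] s).
Proof.
apply: (iffP idP).
  case/subseq_consP => i [Hi Ha /subseq_consP [j [Hj Hb /subseq_consP [k [Hk Hc _]]]]].
  move: Hj Hb Hk Hc; rewrite !size_drop !nth_drop => Hj Hb Hk Hc.
  exists i, (i.+1 + j), ((i.+1 + j).+1 + k); split; try lia.
  by split=> //; rewrite -Hc; congr nth; lia.
case=> i [j [k [Hij Hjk Hk [Ha Hb Hc]]]].
apply/subseq_consP; exists i; split=> //; first by lia.
apply/subseq_consP; exists (j - i.+1); rewrite size_drop nth_drop.
split; first by lia.
  by rewrite -Hb; congr nth; lia.
apply/subseq_consP; exists (k - j.+1); rewrite drop_drop size_drop nth_drop.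
split; first by lia.
  by rewrite -Hc; congr nth; lia.
exact: sub0seq.
Qed.

Lemma avoids_eq n K (w : {ffun 'I_n -> 'I_K}) : avoids321 w = avoid (fw w).
Proof.
rewrite /avoids321 /avoid; apply/idP/idP.
  move/forallP => H; apply/negP => /has321P [a [b [c [Hba Hcb /subseq3P]]]].
  case=> i [j [k [Hij Hjk Hk [Ha Hb Hc]]]].
  rewrite size_fw in Hk.
  have Hj : j < n by lia.
  have Hi : i < n by lia.
  move: (H (Ordinal Hi)) => /forallP /(_ (Ordinal Hj)) /forallP /(_ (Ordinal Hk)) /=.
  rewrite -(nth_fw w (Ordinal Hi)) -(nth_fw w (Ordinal Hj)) -(nth_fw w (Ordinal Hk)) /=.
  by rewrite Ha Hb Hc Hij Hjk Hba Hcb.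
move=> H; apply/forallP => i1; apply/forallP => i2; apply/forallP => i3.
apply/negP => /and4P [H12 H23 Hw21 Hw32].
move/negP: H; apply; apply/has321P.
exists (w i1), (w i2), (w i3); split=> //.
apply/subseq3P; exists i1, i2, i3; split=> //; first by rewrite size_fw.
by rewrite !nth_fw.
Qed.

Lemma sumn_tc_gen t v : sumn (tc 0 t v) = count (fun x => x < t) v.
Proof.
rewrite /tc sumnE big_map.
rewrite (eq_bigr (fun i => \sum_(y <- v) (if y == i then 1 else 0))); last first.
  by move=> i _; rewrite add0n -sum1_count big_mkcond.
rewrite exchange_big /= -sum1_count [RHS]big_mkcond /=; apply: eq_big_seq => y Hy.
rewrite (eq_bigr (fun i => if i == y then 1 else 0)); last by move=> i _; rewrite eq_sym.
case: (ltnP y t) => Hyt.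
  by rewrite sum_pick ?iota_uniq // mem_iota.
rewrite big1_seq // => i /andP[_]; rewrite mem_iota => Hi.
by case: eqP => // E; move: Hi; rewrite E; lia.
Qed.

Lemma sumn_take_tc t K v : t <= K -> sumn (take t (tc 0 K v)) = count (fun x => x < t) v.
Proof.
move=> HtK; rewrite /tc -map_take take_iota.
have -> : minn t K = t by lia.
exact: sumn_tc_gen.
Qed.

Lemma sorted_nth_le (ss : seq nat) i x : sorted leq ss -> i < size ss ->
  (nth 0 ss i <= x) = (i.+1 <= count (fun y => y <= x) ss).
Proof.
elim: ss i => [|y t IH] i //= Hs Hi.
have Hmin := order_path_min leq_trans Hs.
have Ht : sorted leq t by exact: path_sorted Hs.
case: (leqP y x) => Hyx.
  case: i Hi => [|i] Hi /=; first by rewrite Hyx.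
  by rewrite IH //; lia.
have Hc : count (fun y => y <= x) t = 0.
  apply/eqP; rewrite -leqn0 leqNgt -has_count; apply/hasP => -[z Hz Hzx].
  have := allP Hmin z Hz; lia.
rewrite Hc /=.
case: i Hi => [|i] Hi /=; first by apply/negbTE; rewrite -ltnNge.
apply/negbTE; rewrite -ltnNge.
have Hm : nth 0 t i \in t by apply: mem_nth; exact: Hi.
have := allP Hmin _ Hm; lia.
Qed.

Definition PFs n (v : seq nat) := [forall i : 'I_n, nth 0 (sort leq v) i <= i].

Lemma PFs_eq n v : size v = n -> PFs n v = PFc (tc 0 n.+1 v).
Proof.
move=> Hs; rewrite /PFc.
have -> : (size (tc 0 n.+1 v)).-1 = n by rewrite /tc size_map size_iota.
apply/forallP/allP.
  move=> H i; rewrite mem_iota add0n => /andP[_ Hi].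
  have := H (Ordinal Hi); rewrite sorted_nth_le ?sort_sorted ?size_sort ?Hs //; last exact: leq_total.
  rewrite count_sort sumn_take_tc; last by rewrite ltnS ltnW.
  move=> /= H0; exact: H0.
move=> H i; have := H i; rewrite mem_iota add0n ltn_ord => /(_ isT).
rewrite sumn_take_tc; last by rewrite ltnS; exact: ltnW (ltn_ord i).
move=> H0; rewrite sorted_nth_le ?sort_sorted ?size_sort ?Hs //; last exact: leq_total.
by rewrite count_sort.
Qed.

Lemma PFc_all_lt n v : 0 < n -> size v = n -> PFc (tc 0 n.+1 v) -> all (fun x => x < n) v.
Proof.
move=> Hn Hs; rewrite /PFc.
have -> : (size (tc 0 n.+1 v)).-1 = n by rewrite /tc size_map size_iota.
move/allP => H.
have := H n.-1; rewrite mem_iota add0n prednK // => /(_ ltac:(lia)).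
rewrite sumn_take_tc // => Hc.
rewrite all_count; apply/eqP.
have := count_size (fun x => x < n) v; lia.
Qed.

Lemma PF_sum n : 0 < n ->
  \sum_(v <- allw n n | PFs n v && avoid v) 1 =
  \sum_(v <- allw n.+1 n | PFc (tc 0 n.+1 v) && avoid v) 1.
Proof.
move=> Hn.
have Hperm : perm_eq (allw n n) (filter (fun v => all (fun x => x < n) v) (allw n.+1 n)).
  apply: uniq_perm; [exact: uniq_allw| exact/filter_uniq/uniq_allw|].
  move=> v; rewrite mem_filter !mem_allw.
  case Ha: (all (fun x => x < n) v); rewrite ?andbF ?andbT //=.
  have Ha' : all (fun x => x < n.+1) v by apply: sub_all Ha => x /= Hx; lia.
  by rewrite Ha' andbT.
rewrite (perm_big _ Hperm) big_filter_cond big_seq_cond [RHS]big_seq_cond.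
apply: eq_bigl => v.
case Hv: (v \in allw n.+1 n) => //=.
have Hs : size v = n by move: Hv; rewrite mem_allw => /andP[/eqP].
rewrite PFs_eq //.
case HP: (PFc (tc 0 n.+1 v)); rewrite ?andbF //.
by rewrite (PFc_all_lt Hn Hs HP).
Qed.

Theorem theorem3p3 (n : nat) : 0 < n ->
  (n.+1 * #|PF321 n|)%N = w321 n n.+1.
Proof.
case: n => [|n'] // _.
set n := n'.+1.
rewrite /w321.
have -> : [set w : {ffun 'I_n -> 'I_n.+1} | avoids321 w] = [set w | avoid (fw w)].
  by apply/setP => w; rewrite !inE avoids_eq.
rewrite card_bridge.
rewrite (eq_bigl (fun v => predT (tc 0 n.+1 v) && avoid v)) //.
rewrite content_decomp.
rewrite (eq_bigl (fun mu => sumn mu == n)); last by move=> mu; rewrite andbT.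
rewrite pollak; congr (_ * _).
rewrite /PF321.
have -> : [set p : {ffun 'I_n -> 'I_n} | is_parking p && avoids321 p] =
          [set p | PFs n (fw p) && avoid (fw p)].
  by apply/setP => w; rewrite !inE avoids_eq.
rewrite (card_bridge n n' (fun s => PFs n s && avoid s)) PF_sum // content_decomp //.
Qed.
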